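(* Let $X$ be a real Banach space, $x\in X$ and $\delta\in[0,2]$. Then: (1) $P_{B_X}(x,\delta)\subseteq Q_{B_X}(-x,\delta)$ whenever $\|x\|\ge1$; (2) $P_{S_X}(x,\delta)\subseteq Q_{S_X}(-x,\delta)$; (3) $Q_{S_X}(x)=Q_{B_X}(x)$.
   Context: $B_X,S_X$ are the closed unit ball and unit sphere. For non-empty bounded $F$, $r(F,x)=\sup_{y\in F}\|x-y\|$, $Q_F(x,\delta)=\{y\in F:\|x-y\|\ge r(F,x)-\delta\}$, $Q_F(x)=Q_F(x,0)$. For non-empty closed $A$, $P_A(x,\delta)=\{y\in A:\|x-y\|\le\inf_{z\in A}\|x-z\|+\delta\}$. *)

(* Defs.v *)
From HB Require Import structures.
From mathcomp Require Import all_boot all_order all_algebra.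
From mathcomp Require Import all_classical all_reals all_analysis.
Set Implicit Arguments. Unset Strict Implicit. Unset Printing Implicit Defensive.
Import Order.TTheory GRing.Theory Num.Theory.
Import numFieldNormedType.Exports.
Local Open Scope classical_set_scope.
Local Open Scope ring_scope.

Section Defs.
Context {R : realType} {X : normedModType R}.

Definition unit_ball : set X := [set y | `|y| <= 1].
Definition unit_sphere : set X := [set y | `|y| = 1].

Definition farrad (F : set X) (x : X) : R := sup [set `|x - y| | y in F].

Definition Qfar (F : set X) (x : X) (d : R) : set X :=
  [set y | F y /\ farrad F x - d <= `|x - y|].

Definition Pnear (A : set X) (x : X) (d : R) : set X :=
  [set y | A y /\ `|x - y| <= inf [set `|x - z| | z in A] + d].

End Defs.

(* Main.v *)
Require Import Defs.
From HB Require Import structures.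
From mathcomp Require Import all_boot all_order all_algebra.
From mathcomp Require Import all_classical all_reals all_analysis.
From mathcomp Require Import lra.
Import Order.TTheory GRing.Theory Num.Theory.
Import numFieldNormedType.Exports.
Local Open Scope classical_set_scope.
Local Open Scope ring_scope.

Section H.
Variables (R : realType) (X : normedModType R).

Lemma farrad_le (F : set X) (x : X) : F `<=` unit_ball -> F !=set0 ->
  farrad F x <= `|x| + 1.
Proof.
move=> FB [y Fy]; apply: ge_sup; first by exists `|x - y|, y.
move=> _ [z Fz <-]; apply: le_trans (ler_normB _ _) _.
by rewrite lerD2l; apply: FB.
Qed.

Lemma farrad_ge (F : set X) (x u : X) : F `<=` unit_ball -> F u ->
  `|x - u| = `|x| + 1 -> `|x| + 1 <= farrad F x.
Proof.
move=> FB Fu hu; rewrite -hu; apply: ub_le_sup; last by exists u.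
exists (`|x| + 1) => _ [z Fz <-]; apply: le_trans (ler_normB _ _) _.
by rewrite lerD2l; apply: FB.
Qed.

Lemma inf_le_elt (A : set X) (x z : X) : A z ->
  inf [set `|x - z| | z in A] <= `|x - z|.
Proof.
move=> Az; apply: ge_inf; last by exists z.
by exists 0 => _ [w _ <-].
Qed.

Lemma far_pt (v : X) (x : X) : v != 0 ->
  exists u : X, `|u| = 1 /\ `|x - u| = `|x| + 1.
Proof.
move=> v0; have [->|x0] := eqVneq x 0.
  exists (`|v|^-1 *: v); rewrite normrZ normfV normr_id mulVf ?normr_eq0 //.
  by rewrite sub0r normrN normrZ normfV normr_id mulVf ?normr_eq0 // normr0 add0r.
have nx : `|x| != 0 by rewrite normr_eq0.
have px : 0 < `|x| by rewrite normr_gt0.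
exists (- (`|x|^-1 *: x)); rewrite normrN normrZ normfV normr_id mulVf //.
split=> //; rewrite opprK -{1}(scale1r x) -scalerDl normrZ.
rewrite ger0_norm; last by rewrite addr_ge0 // invr_ge0 ltW.
by rewrite mulrDl mul1r mulVf.
Qed.

Lemma near_pt (v : X) (x : X) : v != 0 ->
  exists w : X, `|w| = 1 /\ `|x - w| = `| `|x| - 1 |.
Proof.
move=> v0; have [->|x0] := eqVneq x 0.
  exists (`|v|^-1 *: v); rewrite normrZ normfV normr_id mulVf ?normr_eq0 //.
  by rewrite sub0r normrN normrZ normfV normr_id mulVf ?normr_eq0 // normr0 sub0r normrN normr1.
have nx : `|x| != 0 by rewrite normr_eq0.
exists (`|x|^-1 *: x); rewrite normrZ normfV normr_id mulVf //.
split=> //; rewrite -{1}(scale1r x) -scalerBl normrZ.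
by rewrite -[X in _ * X]normr_id -normrM mulrBl mul1r mulVf // distrC.
Qed.

End H.
Arguments near_pt {R X v}.
Arguments far_pt {R X v}.
Arguments farrad_le {R X}.
Arguments farrad_ge {R X}.
Arguments inf_le_elt {R X}.

Theorem proposition2p12 (R : realType) (X : completeNormedModType R)
  (hX : exists v : X, v != 0) (x : X) (d : R) (hd : 0 <= d <= 2) :
  [/\ (1 <= `|x| -> Pnear unit_ball x d `<=` Qfar unit_ball (- x) d),
      Pnear unit_sphere x d `<=` Qfar unit_sphere (- x) d &
      Qfar unit_sphere x 0 = Qfar unit_ball x 0].
Proof.
have [v v0] := hX.
have SB : (@unit_sphere R X) `<=` unit_ball by move=> y; rewrite /unit_sphere /unit_ball /= => ->.
have [w [w1 xw]] := near_pt x v0.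
have [u [u1 xu]] := far_pt x v0.
have Bne : (@unit_ball R X) !=set0 by exists 0; rewrite /unit_ball /= normr0.
have Sne : (@unit_sphere R X) !=set0 by exists w.
have key : forall y : X, `|x + y| >= 2 * `|x| - `|x - y|.
  move=> y; rewrite lerBlDr; have := ler_normD (x + y) (x - y).
  by rewrite addrACA subrr addr0 -mulr2n normrMn mulr_natl.
split.
- move=> x1 y [By Py]; split=> //.
  have : `|x - y| <= `|x| - 1 + d.
    apply: le_trans Py _; rewrite lerD2r; apply: le_trans (inf_le_elt _ x w _) _.
      by rewrite /unit_ball /= w1.
    by rewrite xw ger0_norm // subr_ge0.
  have k2 := farrad_le _ (- x) (@subset_refl _ unit_ball) Bne.
  have k1 := key y; move=> k3.
  rewrite (_ : `|- x - y| = `|x + y|) ?normrN; last by rewrite -opprD normrN.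
  rewrite normrN in k2; lra.
- move=> y [Sy Py]; split=> //.
  have k4 : `|x - y| <= `| `|x| - 1| + d.
    apply: le_trans Py _; rewrite lerD2r; rewrite -xw; exact: inf_le_elt.
  have k2 := farrad_le _ (- x) SB Sne.
  rewrite normrN in k2.
  rewrite (_ : `|- x - y| = `|x + y|); last by rewrite -opprD normrN.
  have [x1|x1] := leP 1 `|x|.
    rewrite ger0_norm ?subr_ge0 // in k4.
    have := key y; lra.
  rewrite ltr0_norm ?subr_lt0 // in k4.
  have k5 : `|y + x| >= 2 * `|y| - `|y - x|.
    rewrite lerBlDr; have := ler_normD (y + x) (y - x).
    by rewrite addrACA subrr addr0 -mulr2n normrMn mulr_natl.
  rewrite Sy distrC (addrC y x) in k5; lra.
- have eS := farrad_le _ x SB Sne.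
  have eB := farrad_le _ x (@subset_refl _ unit_ball) Bne.
  have fS := farrad_ge _ x _ SB u1 xu.
  have fB := farrad_ge _ x _ (@subset_refl _ unit_ball) (SB _ u1) xu.
  rewrite /Qfar.
  have -> : farrad unit_sphere x = `|x| + 1 by apply/eqP; rewrite eq_le eS fS.
  have -> : farrad unit_ball x = `|x| + 1 by apply/eqP; rewrite eq_le eB fB.
  apply/seteqP; split.
    move=> y [Sy Hy]; split; [exact: SB | exact: Hy].
  move=> y [By Hy]; split=> //.
  have hy : `|y| <= 1 := By.
  have h3 := ler_normB x y.
  rewrite /unit_sphere /=; apply/eqP; rewrite eq_le hy /=; lra.
Qed.
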